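(* Let $P$ be a continuous poset and $M$ a persistence module over $P$. The following are equivalent: (i) $M$ is ephemeral; (ii) $\overline M=0$; (iii) $\underline M=0$.
   Context: Let $P$ be a poset. A subset is directed if nonempty and any two elements have an upper bound in it. $x\ll y$ ($x$ way below $y$) means: for every directed $D$ whose supremum exists with $y\le\sup D$, some $d\in D$ satisfies $x\le d$. $P$ is continuous if for each $p$ the set $\{x:x\ll p\}$ is directed with supremum $p$. $k$ is a commutative ring with unity; a persistence module over $P$ is a functor $M$ from $P$ (as a category) to $k$-modules. Define persistence modules $\underline M_p=\varprojlim_{x\gg p}M_x$ and $\overline M_p=\varinjlim_{x\ll p}M_x$. $M$ is ephemeral if $M(p\le q)=0$ for all $p\ll q$. *)

(* Defs.v *)
From HB Require Import structures.
From mathcomp Require Import all_boot all_order all_algebra.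
Set Implicit Arguments. Unset Strict Implicit. Unset Printing Implicit Defensive.
Import Order.Theory GRing.Theory.
Local Open Scope order_scope.

Section Defs.
Context {disp : Order.disp_t} {P : porderType disp}.

Definition directed (D : P -> Prop) : Prop :=
  (exists x, D x) /\
  (forall x y, D x -> D y -> exists z, [/\ D z, x <= z & y <= z]).

Definition is_sup (D : P -> Prop) (s : P) : Prop :=
  (forall d, D d -> d <= s) /\
  (forall u, (forall d, D d -> d <= u) -> s <= u).

Definition way_below (x y : P) : Prop :=
  forall (D : P -> Prop) (s : P), directed D -> is_sup D s -> y <= s ->
    exists d, D d /\ x <= d.

Definition continuous_poset : Prop :=
  forall p : P, directed (fun x => way_below x p) /\
                is_sup (fun x => way_below x p) p.
End Defs.

Record pmodule {disp : Order.disp_t} (P : porderType disp) (k : comPzRingType) := PModule {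
  pm_obj :> P -> lmodType k;
  pm_map : forall p q : P, p <= q -> {linear pm_obj p -> pm_obj q};
  pm_id : forall (p : P) (h : p <= p) (m : pm_obj p), pm_map h m = m;
  pm_comp : forall (p q r : P) (h1 : p <= q) (h2 : q <= r) (h3 : p <= r)
              (m : pm_obj p), pm_map h3 m = pm_map h2 (pm_map h1 m)
}.

Section Limits.
Context {disp : Order.disp_t} {P : porderType disp} {k : comPzRingType}.
Variable M : pmodule P k.

Definition trivial_mod (L : lmodType k) : Prop := forall l : L, l = 0%R.

Definition is_cocone (I : P -> Prop) (N : lmodType k)
    (leg : forall x : P, {linear M x -> N}) : Prop :=
  forall x y (h : x <= y), I x -> I y ->
    forall m : M x, leg y (pm_map M h m) = leg x m.

Definition is_colimit (I : P -> Prop) (L : lmodType k)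
    (leg : forall x : P, {linear M x -> L}) : Prop :=
  is_cocone I leg /\
  forall (N : lmodType k) (leg' : forall x : P, {linear M x -> N}),
    is_cocone I leg' ->
    exists u : {linear L -> N},
      (forall x, I x -> forall m : M x, u (leg x m) = leg' x m) /\
      (forall v : {linear L -> N},
         (forall x, I x -> forall m : M x, v (leg x m) = leg' x m) ->
         forall l, v l = u l).

Definition is_cone (I : P -> Prop) (N : lmodType k)
    (leg : forall x : P, {linear N -> M x}) : Prop :=
  forall x y (h : x <= y), I x -> I y ->
    forall n : N, pm_map M h (leg x n) = leg y n.

Definition is_limit (I : P -> Prop) (L : lmodType k)
    (leg : forall x : P, {linear L -> M x}) : Prop :=
  is_cone I leg /\
  forall (N : lmodType k) (leg' : forall x : P, {linear N -> M x}),
    is_cone I leg' ->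
    exists u : {linear N -> L},
      (forall x, I x -> forall n : N, leg x (u n) = leg' x n) /\
      (forall v : {linear N -> L},
         (forall x, I x -> forall n : N, leg x (v n) = leg' x n) ->
         forall n, v n = u n).

(** \overline M_p = colim_{x << p} M_x is the zero module. *)
Definition overline_zero_at (p : P) : Prop :=
  exists (L : lmodType k) (leg : forall x : P, {linear M x -> L}),
    is_colimit (fun x => way_below x p) leg /\ trivial_mod L.

(** \underline M_p = lim_{x >> p} M_x is the zero module. *)
Definition underline_zero_at (p : P) : Prop :=
  exists (L : lmodType k) (leg : forall x : P, {linear L -> M x}),
    is_limit (fun x => way_below p x) leg /\ trivial_mod L.

Definition overline_zero : Prop := forall p, overline_zero_at p.
Definition underline_zero : Prop := forall p, underline_zero_at p.

Definition ephemeral : Prop :=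
  forall (p q : P) (h : p <= q), way_below p q ->
    forall m : M p, pm_map M h m = 0%R.
End Limits.

(* Main.v *)
Require Import Defs.
From HB Require Import structures.
From mathcomp Require Import all_boot all_order all_algebra.
Import Order.Theory GRing.Theory.
Set Implicit Arguments. Unset Strict Implicit.

Section Zero.
Variable k : comPzRingType.
Variables U V : lmodType k.
Definition zerof : U -> V := fun _ => 0%R.
Lemma zerof_lin : linear zerof.
Proof. by move=> a x y; rewrite /zerof scaler0 addr0. Qed.
HB.instance Definition _ := GRing.isLinear.Build k U V *:%R zerof zerof_lin.
End Zero.

Local Open Scope order_scope.

Section WB.
Context {disp : Order.disp_t} {P : porderType disp}.

Lemma wb_le (x y : P) : way_below x y -> x <= y.
Proof.
move=> H.
have dir : directed (fun d => d = y).
  split; first by exists y.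
  by move=> a b -> ->; exists y.
have sup : is_sup (fun d => d = y) y.
  split; first by move=> d ->.
  by move=> u; apply.
by have [d [-> ->]] := H (fun d => d = y) y dir sup (le_refl y).
Qed.

Lemma wb_le_r (x y z : P) : way_below x y -> y <= z -> way_below x z.
Proof. by move=> H yz D s dD sD zs; apply: (H D s dD sD); exact: le_trans zs. Qed.

Lemma wb_le_l (w x y : P) : w <= x -> way_below x y -> way_below w y.
Proof.
move=> wx H D s dD sD ys; have [d [Dd xd]] := H D s dD sD ys.
by exists d; split=> //; exact: le_trans xd.
Qed.

Lemma interp (x z : P) : continuous_poset (P := P) -> way_below x z ->
  exists y, way_below x y /\ way_below y z.
Proof.
move=> C H.
pose D := fun w => exists y, way_below w y /\ way_below y z.
have [d [[w [wd dz]] xd]] : exists d, D d /\ x <= d.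
  apply: (H D z) => //.
  - split.
      have [[[y yz] _] _] := C z.
      have [[[w wy] _] _] := C y.
      by exists w, y.
    move=> w1 w2 [y1 [w1y1 y1z]] [y2 [w2y2 y2z]].
    have [[_ dir] _] := C z.
    have [y3 [y3z y13 y23]] := dir y1 y2 y1z y2z.
    have [[_ dir'] _] := C y3.
    have [w3 [w3y w13 w23]] := dir' w1 w2 (wb_le_r w1y1 y13) (wb_le_r w2y2 y23).
    by exists w3; split=> //; exists y3.
  - split.
      by move=> w [y [wy yz]]; exact: le_trans (wb_le wy) (wb_le yz).
    move=> u Hu.
    have [_ [_ supz]] := C z.
    apply: supz => y yz.
    have [_ [_ supy]] := C y.
    apply: supy => w wy.
    by apply: Hu; exists y.
exists w; split=> //; exact: wb_le_l xd wd.
Qed.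
End WB.

Section Main.
Context {disp : Order.disp_t} {P : porderType disp} {k : comPzRingType}.
Variable M : pmodule P k.

Definition legq (q x : P) : {linear M x -> M q} :=
  match sumbool_of_bool (x <= q) with
  | left h => pm_map M h
  | right _ => @zerof _ (M x) (M q)
  end.

Lemma legqE q x (h : x <= q) m : legq q x m = pm_map M h m.
Proof.
rewrite /legq; case: sumbool_of_bool => h'; last by rewrite h in h'.
by rewrite (bool_irrelevance h' h).
Qed.

Definition legp (p x : P) : {linear M p -> M x} :=
  match sumbool_of_bool (p <= x) with
  | left h => pm_map M h
  | right _ => @zerof _ (M p) (M x)
  end.

Lemma legpE p x (h : p <= x) m : legp p x m = pm_map M h m.
Proof.
rewrite /legp; case: sumbool_of_bool => h'; last by rewrite h in h'.
by rewrite (bool_irrelevance h' h).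
Qed.

Definition Z := 'rV[k]_0.
Lemma Ztriv (l : Z) : l = 0%R.
Proof. by apply/matrixP => i []. Qed.

Lemma eph_over : continuous_poset (P := P) -> ephemeral M -> overline_zero M.
Proof.
move=> C E p; exists Z, (fun x => @zerof _ (M x) Z); split; last exact: Ztriv.
split; first by move=> x y h _ _ m.
move=> N leg' cc; exists (@zerof _ Z N); split.
  move=> x xp m; rewrite /zerof.
  have [y [xy yp]] := interp C xp.
  rewrite -(cc x y (wb_le xy) xp yp m).
  by rewrite (E x y (wb_le xy) xy m); exact: (esym (raddf0 (leg' y))).
by move=> v _ l; rewrite (Ztriv l) linear0 /zerof.
Qed.

Lemma over_eph : overline_zero M -> ephemeral M.
Proof.
move=> O p q h pq m.
have [L [leg [[cc univ] tr]]] := O q.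
have cc' : is_cocone (M:=M) (fun x => way_below x q) (legq q).
  move=> x y h' xq yq n.
  rewrite (legqE (wb_le yq)) (legqE (wb_le xq)).
  by rewrite (pm_comp h' (wb_le yq) (wb_le xq)).
have [u [Hu _]] := univ _ _ cc'.
have := Hu p pq m; rewrite (tr (leg p m)) linear0 (legqE h) => <-.
by [].
Qed.

Lemma eph_under : continuous_poset (P := P) -> ephemeral M -> underline_zero M.
Proof.
move=> C E p; exists Z, (fun x => @zerof _ Z (M x)); split; last exact: Ztriv.
split; first by move=> x y h _ _ n; rewrite /zerof linear0.
move=> N leg' cc; exists (@zerof _ N Z); split.
  move=> x px n; rewrite /zerof.
  have [y [py yx]] := interp C px.
  rewrite -(cc y x (wb_le yx) py px n).
  by rewrite (E y x (wb_le yx) yx).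
by move=> v _ n; rewrite (Ztriv (v n)).
Qed.

Lemma under_eph : underline_zero M -> ephemeral M.
Proof.
move=> U p q h pq m.
have [L [leg [[cc univ] tr]]] := U p.
have cc' : is_cone (M:=M) (fun x => way_below p x) (legp p).
  move=> x y h' px py n.
  rewrite (legpE (wb_le py)) (legpE (wb_le px)).
  by rewrite (pm_comp (wb_le px) h' (wb_le py)).
have [u [Hu _]] := univ _ _ cc'.
have := Hu q pq m; rewrite (tr (u m)) linear0 (legpE h) => <-.
by [].
Qed.
End Main.

Theorem mainTheorem6 (disp : Order.disp_t) (P : porderType disp)
  (k : comPzRingType) (M : pmodule P k) :
  continuous_poset (P := P) ->
  (ephemeral M <-> overline_zero M) /\ (overline_zero M <-> underline_zero M).
Proof.
move=> C; split; split.
- exact: eph_over.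
- exact: over_eph.
- by move=> O; apply: eph_under => //; exact: over_eph.
- by move=> U; apply: eph_over => //; exact: under_eph.
Qed.
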